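(* In every tranca mínima (as defined in the context), the losing team places at least one tile during the game.
   Context: Domino tiles: the set of tiles consists of the 28 unordered pairs $[a,b]=[b,a]$ with $a,b\in\{0,1,\dots,6\}$; the number of points (pips) of $[a,b]$ is $a+b$. Four players, numbered 1 to 4, play; players 1 and 3 form one team and players 2 and 4 the other. The 28 tiles are dealt, 7 to each player (the initial hands). Players take turns in cyclic order $1,2,3,4,1,\dots$. The starting player places any one of their tiles on the table, forming a line of tiles (the board) with two open ends. On each subsequent turn, the player whose turn it is must, if they hold a tile containing a number equal to the number shown at one of the two open ends, place such a tile at that end (with equal numbers adjacent), the other number of the tile becoming the new open end; if they hold no such tile, they pass. A game ends either when a player places their last tile, or in a tranca (blocked game): a position in which no player holds a tile that can be placed. In a game ending in a tranca, the team whose two players' remaining tiles have the smaller total number of pips wins, and the other team is the losing team. A tranca mínima is a game ending in a tranca in which the total number of pips on the tiles of the board at the end of the game is $42$. *)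

(* Defs.v *)
From mathcomp Require Import all_boot.
Set Implicit Arguments. Unset Strict Implicit. Unset Printing Implicit Defensive.

Notation num := 'I_7.

(* A tile [a,b] = [b,a] is stored in normal form (a,b) with a <= b.
   There are exactly 28 of them. *)
Definition tile := {p : num * num | p.1 <= p.2}.

Definition pips (t : tile) : nat := (val t).1 + (val t).2.

Definition has_num (t : tile) (x : num) : bool :=
  ((val t).1 == x) || ((val t).2 == x).

Definition oriented (o : num * num) (t : tile) : bool :=
  ((o.1 == (val t).1) && (o.2 == (val t).2)) ||
  ((o.1 == (val t).2) && (o.2 == (val t).1)).

(* Players 1,2,3,4 are 'I_4 indices 0,1,2,3.  Team of a player:
   players 1 and 3 (indices 0,2) are team [false], players 2 and 4 team [true]. *)
Definition team (p : 'I_4) : bool := odd p.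

(* The board is a line of oriented tiles; adjacent tiles have equal numbers
   touching; the open ends are (head).1 and (last).2. *)
Definition board := seq (num * num).

Definition board_pips (b : board) : nat := \sum_(o <- b) (o.1 + o.2).

Definition playable (h : {set tile}) (b : board) : bool :=
  match b with
  | [::] => h != set0
  | e :: _ => [exists t in h, has_num t e.1 || has_num t (last e b).2]
  end.

Definition step (p : 'I_4) (h : 'I_4 -> {set tile}) (b : board)
    (h' : 'I_4 -> {set tile}) (b' : board) : Prop :=
  (exists (t : tile) (o : num * num),
      t \in h p /\ oriented o t /\
      (forall q, h' q = if q == p then h p :\ t else h q) /\
      [\/ b = [::] /\ b' = [:: o],
          (exists e r, b = e :: r /\ o.2 = e.1 /\ b' = o :: b)
        | (exists e r, b = rcons r e /\ o.1 = e.2 /\ b' = rcons b o)])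
  \/ (~~ playable (h p) b /\ (forall q, h' q = h q) /\ b' = b).

Definition deal (h : 'I_4 -> {set tile}) : Prop :=
  (forall p, #|h p| = 7) /\
  (forall t : tile, exists p, t \in h p) /\
  (forall (t : tile) p q, t \in h p -> t \in h q -> p = q).

Definition all_nonempty (h : 'I_4 -> {set tile}) : Prop :=
  forall p, h p != set0.

Definition blocked (h : 'I_4 -> {set tile}) (b : board) : Prop :=
  b <> [::] /\ forall p, ~~ playable (h p) b.

Definition turn (start : 'I_4) (k : nat) : 'I_4 := inord ((start + k) %% 4).

Definition game_ending_in_tranca (start : 'I_4) (n : nat)
    (hs : nat -> 'I_4 -> {set tile}) (bs : nat -> board) : Prop :=
  [/\ deal (hs 0), bs 0 = [::],
      (forall k, k < n ->
         [/\ all_nonempty (hs k), ~ blocked (hs k) (bs k) &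
             step (turn start k) (hs k) (bs k) (hs k.+1) (bs k.+1)]),
      all_nonempty (hs n) & blocked (hs n) (bs n)].

Definition tranca_minima (start : 'I_4) (n : nat)
    (hs : nat -> 'I_4 -> {set tile}) (bs : nat -> board) : Prop :=
  game_ending_in_tranca start n hs bs /\ board_pips (bs n) = 42.

Definition team_pips (h : 'I_4 -> {set tile}) (T : bool) : nat :=
  \sum_(p : 'I_4 | team p == T) \sum_(t in h p) pips t.

Definition losing_team (h : 'I_4 -> {set tile}) (T : bool) : Prop :=
  team_pips h (~~ T) < team_pips h T.

Definition places_tile_at (bs : nat -> board) (k : nat) : Prop :=
  size (bs k.+1) = (size (bs k)).+1.

(* Main.v *)
Require Import Defs.
From mathcomp Require Import all_boot zify.
Set Implicit Arguments. Unset Strict Implicit. Unset Printing Implicit Defensive.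


Definition srt (y z : num) : num * num := if y <= z then (y, z) else (z, y).
Lemma srt_ok y z : (srt y z).1 <= (srt y z).2.
Proof. rewrite /srt; case: (leqP y z) => [//|/ltnW //]. Qed.
Definition mk (y z : num) : tile := exist _ (srt y z) (srt_ok y z).

Lemma mkE (t : tile) y z : (val t = (y, z)) \/ (val t = (z, y)) -> t = mk y z.
Proof.
case: t => [[t1 t2] /= Ht] Hv; apply: val_inj => /=; rewrite /srt.
case: (leqP y z) => Hyz; case: Hv => [[e1 e2]|[e1 e2]]; subst => //=.
- by have -> : y = z by apply/val_inj/anti_leq; rewrite Hyz Ht.
- by move: Ht; rewrite leqNgt Hyz.
Qed.

Lemma mk_sym y z : mk y z = mk z y.
Proof. apply: mkE; rewrite /mk /= /srt; case: (leqP y z) => _; first [by left | by right]. Qed.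

Lemma mk_has y z : has_num (mk y z) y && has_num (mk y z) z.
Proof. by rewrite /has_num /= /srt; case: (leqP y z) => _ /=; rewrite !eqxx ?orbT. Qed.

Lemma small_card (h : {set tile}) (C : {set num}) :
  (forall t, t \in h -> ((val t).1 \in C) && ((val t).2 \in C)) -> #|C| <= 3 -> #|h| <= 6.
Proof.
move=> hC cC.
pose s := enum C.
pose a := nth ord0 s 0; pose b := nth ord0 s 1; pose c := nth ord0 s 2.
have inC : forall v, v \in C -> (v == a) || (v == b) || (v == c).
  move=> v vC. have vs : v \in s by rewrite mem_enum.
  have lt3 : index v s < 3.
    rewrite -index_mem in vs; apply: leq_trans vs _; by rewrite -cardE.
  move: (nth_index ord0 vs) lt3.
  by case: (index v s) => [|[|[|k]]] //= <- _; rewrite eqxx ?orbT.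
clearbody a b c.
pose L := [:: mk a a; mk a b; mk a c; mk b b; mk b c; mk c c].
have cL := card_size L. have sL : size L = 6 by []. rewrite sL in cL. apply: (leq_trans _ cL).
have sub : {subset h <= L}.
  move=> t th.
  have key : forall y z, (val t).1 = y -> (val t).2 = z -> t = mk y z.
    move=> y z e1 e2; apply: mkE; left; rewrite -e1 -e2; by case: (val t).
  move: (hC t th) => /andP[/inC h1 /inC h2].
  move: h1 h2 => /orP[/orP[]|] /eqP e1 /orP[/orP[]|] /eqP e2;
    rewrite (key _ _ e1 e2);
    first [by rewrite !inE eqxx ?orbT | by rewrite mk_sym !inE eqxx ?orbT].
clearbody L.
have := subset_leq_card (introT subsetP sub).
move=> H; exact H.
Qed.

Lemma lack_card (h : {set tile}) :
  #|h| = 7 -> #|[set v : num | [forall t in h, ~~ has_num t v]]| <= 3.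
Proof.
move=> h7. set A := [set v : num | _].
rewrite leqNgt; apply/negP => A4.
have : #|h| <= 6.
  apply: (small_card (C := ~: A)).
    move=> t th; rewrite !inE; apply/andP; split;
    apply/negP => /forallP /(_ t); by rewrite th /has_num eqxx ?orbT.
  move: A4 (cardsC A); rewrite card_ord. move: #|A| #|~: A| => x y. lia.
by rewrite h7.
Qed.

Lemma comb2 (h1 h2 : {set tile}) : #|h1| = 7 -> #|h2| = 7 ->
  (forall v : num, (forall t, t \in h1 -> ~~ has_num t v) \/
                   (forall t, t \in h2 -> ~~ has_num t v)) -> False.
Proof.
move=> c1 c2 H.
have := lack_card c1; have := lack_card c2.
set A1 := [set v : num | [forall t in h1, _]].
set A2 := [set v : num | [forall t in h2, _]].
move=> a2 a1.
have : [set: num] \subset A1 :|: A2.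
  apply/subsetP => v _; rewrite !inE.
  case: (H v) => hv; apply/orP; [left|right]; apply/forallP => t; apply/implyP; exact: hv.
move/subset_leq_card; rewrite cardsT card_ord cardsU. move: a1 a2. move: #|A1| #|A2| #|A1 :&: A2| => x y z. lia.
Qed.


Definition ends (b : board) : seq num :=
  match b with e :: _ => [:: e.1; (last e b).2] | [::] => [::] end.

Definition onb (v : num) (b : board) : bool := has (fun o => (o.1 == v) || (o.2 == v)) b.

Lemma ends_rcons r (e : num * num) : e.2 \in ends (rcons r e).
Proof. case: r => [|y r] /=; first by rewrite !inE eqxx orbT.
by rewrite last_rcons !inE eqxx orbT. Qed.

Lemma not_playable_ends h b v : ~~ playable h b -> v \in ends b ->
  forall t, t \in h -> ~~ has_num t v.
Proof.
case: b => [|e r] //= Hp; rewrite !inE => /orP[]/eqP-> t th; apply/negP => Ht;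
  move/negP: Hp; apply; apply/existsP; exists t; by rewrite th Ht ?orbT.
Qed.

Lemma step_size p h b h' b' : step p h b h' b' ->
  size b' = (size b).+1 \/ (~~ playable (h p) b /\ (forall q, h' q = h q) /\ b' = b).
Proof.
case=> [[t [o [_ [_ [_ Hb]]]]]|]; last by right.
left; case: Hb => [[-> ->]|[e [r [-> [_ ->]]]]|[e [r [-> [_ ->]]]]] //.
by rewrite size_rcons.
Qed.

Lemma step_other p h b h' b' : step p h b h' b' -> forall q, q != p -> h' q = h q.
Proof.
case=> [[t [o [_ [_ [Hh _]]]]]|[_ [Hh _]]] q qp; rewrite Hh //.
by rewrite (negbTE qp).
Qed.

Lemma turn_team start k : team (turn start k) = odd start (+) odd k.
Proof.
rewrite /team /turn inordK; last by apply: ltn_pmod.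
by rewrite odd_mod // oddD.
Qed.

Lemma turn_mod start k : turn start k = turn start (k %% 4).
Proof. by rewrite /turn modnDmr. Qed.


Theorem mainTheorem7 (start : 'I_4) (n : nat)
    (hs : nat -> 'I_4 -> {set tile}) (bs : nat -> board) (T : bool) :
  tranca_minima start n hs bs ->
  losing_team (hs n) T ->
  exists k, k < n /\ team (turn start k) = T /\ places_tile_at bs k.
Proof.
move=> [[Hdeal Hb0 Hsteps Hne Hblk] _] _.
case: (boolP [exists k : 'I_n, (team (turn start k) == T) &&
                 (size (bs k.+1) == (size (bs k)).+1)]).
  by case/existsP => k /andP[/eqP Hk /eqP Hs]; exists k; split.
move=> /negP NE; exfalso.
have NP : forall k, k < n -> team (turn start k) = T ->
    ~~ playable (hs k (turn start k)) (bs k) /\ (forall q, hs k.+1 q = hs k q) /\ bs k.+1 = bs k.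
  move=> k kn Hk; have [_ _ Hst] := Hsteps k kn.
  case: (step_size Hst) => // Hs; exfalso; apply: NE; apply/existsP.
  by exists (Ordinal kn); rewrite /= Hk Hs !eqxx.
have Hconst : forall k, k <= n -> forall q, team q = T -> hs k q = hs 0 q.
  elim=> [//|k IH] kn q Hq; have kn' : k < n := kn.
  rewrite -(IH (ltnW kn) q Hq).
  case: (boolP (team (turn start k) == T)) => [/eqP Hk | Hk].
    by have [_ [-> _]] := NP k kn' Hk.
  have [_ _ Hst] := Hsteps k kn'; apply: (step_other Hst).
  by apply: contraNneq Hk => <-; rewrite Hq.
have n0 : 0 < n.
  rewrite lt0n; apply/eqP => n0; move: Hblk => [Hb _]; apply: Hb; by rewrite n0.
have Tst : T = ~~ odd start.
  case: (boolP (odd start == T)) => [/eqP oT | ].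
    have t0 : team (turn start 0) = T by rewrite turn_team addbF.
    have [Hp _] := NP 0 n0 t0.
    move: Hp; rewrite Hb0 /= negbK => /eqP E.
    by move: (Hdeal.1 (turn start 0)); rewrite E cards0.
  by move=> H; apply/eqP; move: H; case: (odd start); case: (T).
have tT : forall k, (team (turn start k) == T) = odd k.
  by move=> k; rewrite turn_team Tst; case: (odd start); case: (odd k).
have Heven : forall k, 0 < k -> k <= n -> ~~ odd k -> bs k = bs k.-1.
  move=> [//|k] _ kn ok /=.
  have Hk : team (turn start k) = T by apply/eqP; rewrite tT; move: ok => /=; rewrite negbK.
  by have [_ [_ ->]] := NP k kn Hk.
have HJ : forall k, k <= n -> forall v, onb v (bs k) ->
    v \in ends (bs k) \/ exists j, [/\ j < k, odd j & v \in ends (bs j)].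
  elim=> [|k IH] kn v; first by rewrite Hb0.
  have kn' : k < n := kn. have IHk := IH (ltnW kn).
  have old : forall w, (w \in ends (bs k) \/ exists j, [/\ j < k, odd j & w \in ends (bs j)]) ->
      exists j, [/\ j < k.+1, odd j & w \in ends (bs j)].
    move=> w [wk | [j [jk oj wj]]]; last by exists j; split => //; apply: leqW.
    case: (boolP (odd k)) => ok; first by exists k.
    have [k0|kpos] := posnP k; first by move: wk; rewrite k0 Hb0.
    exists k.-1; split.
    - by rewrite prednK // ltnW.
    - by move: ok; rewrite -(prednK kpos) /= negbK.
    - by rewrite -Heven // ltnW.
  case: (boolP (odd k)) => ok.
    have Hk : team (turn start k) = T by apply/eqP; rewrite tT.
    have [_ [_ ->]] := NP k kn' Hk.
    by move=> vb; right; apply: old; apply: IHk.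
  have [_ _ Hst] := Hsteps k kn'.
  case: Hst => [[t [o [_ [_ [_ Hb]]]]] | [_ [_ ->]]]; last first.
    by move=> vb; right; apply: old; apply: IHk.
  case: Hb => [[Ebk ->] | [e [r [Ebk [Ho ->]]]] | [e [r [Ebk [Ho ->]]]]].
  - rewrite /onb /= orbF => /orP[]/eqP <-; left; by rewrite !inE eqxx ?orbT.
  - rewrite /onb /= -orbA => /orP[/eqP <-|/orP[/eqP <-|vb]].
    + by left; rewrite !inE eqxx.
    + right; apply: old; left; by rewrite Ebk Ho !inE eqxx.
    + right; apply: old; apply: IHk; exact: vb.
  - rewrite /onb has_rcons => /orP[/orP[/eqP <-|/eqP <-]|vb].
    + right; apply: old; left; rewrite Ebk Ho; exact: ends_rcons.
    + by left; apply: ends_rcons.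
    + by right; apply: old; apply: IHk.
have HK : forall k, k <= n -> forall t,
    (exists p, t \in hs k p) \/ has (fun o => oriented o t) (bs k).
  elim=> [|k IH] kn t; first by left; apply: Hdeal.2.1.
  have [_ _ Hst] := Hsteps k kn.
  case: Hst => [[t0 [o [t0h [ot0 [Hh Hb]]]]] | [_ [Hh ->]]]; last first.
    by case: (IH (ltnW kn) t) => [[p tp]|tb]; [left; exists p; rewrite Hh | right].
  have bo : forall P : pred (num * num), (P o || has P (bs k)) -> has P (bs k.+1).
    move=> P; case: Hb => [[-> ->]|[e [r [-> [_ ->]]]]|[e [r [-> [_ ->]]]]] /=.
    - by rewrite orbF.
    - by [].
    - by rewrite !has_rcons.
  case: (eqVneq t t0) => [-> | tt0]; first by right; apply: bo; rewrite ot0.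
  case: (IH (ltnW kn) t) => [[p tp] | tb]; last by right; apply: bo; rewrite tb orbT.
  left; exists p; rewrite Hh; case: eqP => [Ep | _] //.
  by rewrite Ep in tp; rewrite !inE tt0 tp.
have [bn_ne Hbl] := Hblk.
have lackv : forall v, exists j, odd j /\ forall t, t \in hs 0 (turn start j) -> ~~ has_num t v.
  move=> v.
  case Ebn: (bs n) bn_ne => [|e r] // _.
  have /andP[tx tv] := mk_has e.1 v. move: (mk e.1 v) tx tv => t tx tv.
  have tnot : forall p, t \notin hs n p.
    move=> p; apply/negP => tp; move: (Hbl p); rewrite Ebn /= => /existsP; apply.
    by exists t; rewrite tp tx.
  have tb : has (fun o => oriented o t) (bs n).
    case: (HK n (leqnn n) t) => // [[p tp]]; by move: (tnot p); rewrite tp.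
  have vb : onb v (bs n).
    move/hasP: tb => [o ob ot]; apply/hasP; exists o => //.
    move: ot tv; rewrite /oriented /has_num.
    by case/orP => /andP[/eqP-> /eqP->] /orP[/eqP->|/eqP->]; rewrite eqxx ?orbT.
  case: (HJ n (leqnn n) v vb) => [ve | [j [jn oj vj]]].
    exists 1; split => //.
    have H1 : team (turn start 1) = T by apply/eqP; rewrite tT.
    rewrite -(Hconst n (leqnn n) _ H1).
    apply: not_playable_ends ve; exact: Hbl.
  exists j; split => //.
  have Hj : team (turn start j) = T by apply/eqP; rewrite tT.
  rewrite -(Hconst j (ltnW jn) _ Hj).
  have [Hp _] := NP j jn Hj.
  exact: not_playable_ends Hp vj.
apply: (comb2 (Hdeal.1 (turn start 1)) (Hdeal.1 (turn start 3))) => v.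
have [j [oj Hj]] := lackv v.
rewrite turn_mod in Hj.
have : j %% 4 < 4 by apply: ltn_pmod.
have : odd (j %% 4) by rewrite odd_mod.
case: (j %% 4) Hj => [|[|[|[|m]]]] //= Hj _ _; [left|right]; exact: Hj.
Qed.
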